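(* Let $A$ be an infinite set, fix $z\in A$, $A'=A\setminus\{z\}$, and $p\in[1,\infty)$. Let $\alpha^n=a_1^na_2^n\ldots\in N(A)$ for $n\in\mathbb{N}^*$, $x_n=p_p(\alpha^n)$, and let $\alpha=a_1a_2\ldots\in N(A)$, $x=p_p(\alpha)$. Suppose the sequence $(a_n)_{n\in\mathbb{N}^*}$ is not eventually constant (i.e. for every $q\in\mathbb{N}^*$ it is not constant from index $q$ on) and $\lim_{n\to\infty}\|x_n-x\|_p=0$. Then $\lim_{n\to\infty}\alpha^n=\alpha$ in $N(A)$.
   Context: $l^p(A)$ is the set of families $x=(x_a)_{a\in A'}$ of real numbers with $x_a=0$ for all but countably many $a$ and $\sum_a|x_a|^p<\infty$, with norm $\|x\|_p=(\sum_a|x_a|^p)^{1/p}$. $N(A)$ is the set of all sequences $\alpha=a_1a_2a_3\ldots$ with $a_k\in A$, with metric $d(v,v')=1/k$ where $k$ is the first index at which $v,v'$ differ, and $d(v,v)=0$. The map $p_p:N(A)\to l^p(A)$ is $p_p(\alpha)=(\alpha_b)_{b\in A'}$ where, for $\alpha=a_1a_2\ldots$, $\alpha_b=\sum_{k:\,a_k=b}2^{-k}$ (and $\alpha_b=0$ if no $a_k$ equals $b$). *)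

(* Defs.v *)
From HB Require Import structures.
From mathcomp Require Import all_boot all_order all_algebra.
From mathcomp Require Import all_classical all_reals all_analysis.
Set Implicit Arguments. Unset Strict Implicit. Unset Printing Implicit Defensive.
Import Order.TTheory GRing.Theory Num.Theory.
Import numFieldNormedType.Exports.
Local Open Scope classical_set_scope.
Local Open Scope ring_scope.

(* Elements of N(A) are sequences alpha : nat -> A; alpha k is the
   (k+1)-th letter a_(k+1) (0-based storage of the 1-based sequence). *)

(* alpha_b = sum_{k >= 1, a_k = b} 2^{-k}; with 0-based storage the letter
   at position k has weight 2^{-(k+1)}. *)
Definition coord (R : realType) (A : choiceType) (alpha : nat -> A) (b : A) : R :=
  limn (series (fun k : nat => if alpha k == b then (2%:R ^- k.+1 : R) else 0)).

(* p_p(alpha) as a family indexed by A (only its values on A' = A \ {z}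
   matter for the l^p norm below). *)
Definition pp (R : realType) (A : choiceType) (alpha : nat -> A) : A -> R :=
  fun b => coord R alpha b.

Definition lpnorm (R : realType) (A : choiceType) (z : A) (p : R) (x : A -> R) : R :=
  (fine (\esum_(b in [set b : A | b <> z]) ((`|x b| `^ p)%:E))) `^ p^-1.

Definition Nd (R : realType) (A : choiceType) (v v' : nat -> A) : R :=
  match pselect (exists k, v k != v' k) with
  | left h => (ex_minn h).+1%:R^-1
  | right _ => 0
  end.

(* Main.v *)
Require Import Defs.
From HB Require Import structures.
From mathcomp Require Import all_boot all_order all_algebra.
From mathcomp Require Import all_classical all_reals all_analysis.
From mathcomp Require Import lra.
Import Order.TTheory GRing.Theory Num.Theory.
Import numFieldNormedType.Exports.
Local Open Scope classical_set_scope.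
Local Open Scope ring_scope.

Section Aux.
Variable R : realType.

Definition w (n : nat) : R := 2%:R ^- n.+1.

Lemma w_gt0 n : 0 < w n.
Proof. by rewrite /w invr_gt0 exprn_gt0. Qed.

Lemma wS n : w n = w n.+1 + w n.+1.
Proof.
have -> : w n.+1 = w n / 2 by rewrite /w exprS invfM mulrC.
exact: splitr.
Qed.

Lemma w_anti m n : (m <= n)%N -> w n <= w m.
Proof.
elim: n => [|n IH]; first by rewrite leqn0 => /eqP ->.
rewrite leq_eqVlt => /orP[/eqP -> //|/IH].
apply: le_trans; rewrite (wS n) lerDr; exact/ltW/w_gt0.
Qed.

Lemma sum_w_le1 N : \sum_(0 <= i < N) w i <= 1 - 2%:R ^- N.
Proof.
elim: N => [|N IH]; first by rewrite big_geq // expr0 invr1 subrr.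
rewrite big_nat_recr //=.
have h : 2%:R ^- N = w N + w N :> R.
  by rewrite /w exprS invfM mulrC -splitr.
rewrite h in IH; rewrite /w in IH *; lra.
Qed.

Lemma core_partial (u v : nat -> R) k j :
  (forall i, 0 <= u i <= w i) -> (forall i, 0 <= v i <= w i) ->
  (forall i, (i < k)%N -> u i = v i) -> u k = w k -> v k = 0 ->
  (k < j)%N -> v j <= u j ->
  forall N, (j < N)%N -> w j <= \sum_(0 <= i < N) (u i - v i).
Proof.
move=> hu hv heq huk hvk kj hj.
have inv : forall m, w (k + m) + (if (j < k.+1 + m)%N then w j else 0)
   <= \sum_(0 <= i < k.+1 + m) (u i - v i).
  elim=> [|m IH].
    rewrite !addn0 (big_nat_recr k) // big1_seq; last first.
      by move=> i /andP[_]; rewrite mem_index_iota => /andP[_ /heq ->]; rewrite subrr.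
    rewrite /= add0r huk hvk subr0.
    have -> : (j < k.+1)%N = false by rewrite ltnS leqNgt kj.
    by rewrite addr0.
  rewrite [(k.+1 + m.+1)%N]addnS big_nat_recr; last by rewrite leq0n.
  case: (eqVneq (k.+1 + m)%N j) => [Ej|Nj].
    have -> : (j < (k.+1 + m).+1)%N by rewrite Ej.
    move: IH; rewrite Ej ltnn addr0 => IH.
    have e1 : w (k + m) = w j + w j by rewrite -Ej addSn wS.
    have e2 : (k + m.+1)%N = j by rewrite addnS -addSn.
    rewrite e2 /=; have := hu j; have := hv j; lra.
  have -> : (j < (k.+1 + m).+1)%N = (j < k.+1 + m)%N.
    by rewrite ltnS leq_eqVlt eq_sym (negbTE Nj).
  have e1 : w (k + m) = w (k + m.+1) + w (k + m.+1) by rewrite addnS wS.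
  have e2 : (k + m.+1)%N = (k.+1 + m)%N by rewrite addnS addSn.
  move: IH; rewrite e1 e2.
  have := hu (k.+1 + m)%N; have := hv (k.+1 + m)%N.
  rewrite /=; case: ifP => _; lra.
move=> N jN.
have kN : (k.+1 <= N)%N by apply: leq_trans kj (ltnW jN).
have := inv (N - k.+1)%N; rewrite subnKC // jN.
have := w_gt0 (k + (N - k.+1)); lra.
Qed.

Lemma psum_le1 (u : nat -> R) : (forall i, 0 <= u i <= w i) ->
  forall N, \sum_(0 <= i < N) u i <= 1.
Proof.
move=> hu N; have h1 : \sum_(0 <= i < N) u i <= \sum_(0 <= i < N) w i.
  by apply: ler_sum => i _; case/andP: (hu i).
have h2 := sum_w_le1 N.
have h3 : 0 <= 2%:R ^- N :> R by rewrite invr_ge0 exprn_ge0.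
lra.
Qed.

Lemma series_w_cvg (u : nat -> R) : (forall i, 0 <= u i <= w i) -> cvgn (series u).
Proof.
move=> hu; apply: nondecreasing_is_cvgn.
  move=> m n mn; rewrite /series /=.
  by apply: (nondecreasing_series (P := xpredT) (m := 0%N)) => // i _ _; case/andP: (hu i).
exists 1 => _ [N _ <-]; rewrite /series /=.
exact: psum_le1.
Qed.

Lemma series_w_le1 (u : nat -> R) : (forall i, 0 <= u i <= w i) -> limn (series u) <= 1.
Proof.
move=> hu; apply: limr_le; first exact: series_w_cvg.
apply: nearW => N; rewrite /series /=.
exact: psum_le1.
Qed.

Lemma series_w_ge0 (u : nat -> R) : (forall i, 0 <= u i <= w i) -> 0 <= limn (series u).
Proof.
move=> hu; apply: limr_ge; first exact: series_w_cvg.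
apply: nearW => N; rewrite /series /=.
by apply: sumr_ge0 => i _; case/andP: (hu i).
Qed.

Lemma core_lim (u v : nat -> R) k j :
  (forall i, 0 <= u i <= w i) -> (forall i, 0 <= v i <= w i) ->
  (forall i, (i < k)%N -> u i = v i) -> u k = w k -> v k = 0 ->
  (k < j)%N -> v j <= u j ->
  w j <= limn (series u) - limn (series v).
Proof.
move=> hu hv heq huk hvk kj hj.
rewrite -limB; [|exact: series_w_cvg|exact: series_w_cvg].
apply: limr_ge; first by apply: is_cvgB; exact: series_w_cvg.
near=> N; have -> : (series u - series v) N = \sum_(0 <= i < N) (u i - v i) by rewrite sumrB.
apply: (core_partial _ _ _ _ hu hv heq huk hvk kj hj).
near: N; exact: nbhs_infty_gt.
Unshelve. all: end_near.
Qed.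

End Aux.

Section Coord.
Variable R : realType.
Variable A : choiceType.
Implicit Types (al an : nat -> A) (b : A).

Definition tm (al : nat -> A) (b : A) : nat -> R := fun i => if al i == b then w R i else 0.

Lemma coordE al b : Defs.coord R al b = limn (series (tm al b)).
Proof. by []. Qed.

Lemma tm_bnd al b i : 0 <= tm al b i <= w R i.
Proof. by rewrite /tm; case: ifP; rewrite ?lexx ?ltW ?w_gt0. Qed.

Lemma coord_ge0 al b : 0 <= Defs.coord R al b.
Proof. by rewrite coordE; apply: series_w_ge0 => i; exact: tm_bnd. Qed.

Lemma coord_le1 al b : Defs.coord R al b <= 1.
Proof. by rewrite coordE; apply: series_w_le1 => i; exact: tm_bnd. Qed.

Lemma sum_tm_bnd al (s : seq A) i : uniq s ->
  0 <= \sum_(b <- s) tm al b i <= w R i.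
Proof.
elim: s => [|x s IH]; first by rewrite big_nil lexx ltW ?w_gt0.
rewrite big_cons /= => /andP[xs us].
case: (eqVneq (al i) x) => [E|N].
  rewrite big1_seq ?addr0; first by apply: tm_bnd.
  move=> b /andP[_ bs]; rewrite /tm; case: eqP => // E2.
  by move: xs; rewrite -E E2 bs.
by rewrite {1 3}/tm (negbTE N) add0r; apply: IH.
Qed.

Lemma sum_coord al (s : seq A) :
  cvgn (series (fun i => \sum_(b <- s) tm al b i)) /\
  limn (series (fun i => \sum_(b <- s) tm al b i)) = \sum_(b <- s) Defs.coord R al b.
Proof.
elim: s => [|x s [IHc IHl]].
  have -> : series (fun i => \sum_(b <- [::]) tm al b i) = fun _ => 0.
    apply: funext => N; rewrite /series /=; apply: big1 => i _; by rewrite big_nil.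
  by rewrite big_nil; split; [exact: is_cvg_cst|exact: lim_cst].
have -> : (fun i => \sum_(b <- x :: s) tm al b i) =
   (tm al x + (fun i => \sum_(b <- s) tm al b i))%R.
  by apply: funext => i; rewrite big_cons.
have cx : cvgn (series (tm al x)) by apply: series_w_cvg => i; exact: tm_bnd.
split; first exact: is_cvg_seriesD.
by rewrite lim_seriesD // IHl big_cons coordE.
Qed.

Lemma sum_coord_le1 al (s : seq A) : uniq s -> \sum_(b <- s) Defs.coord R al b <= 1.
Proof.
move=> us; have [_ <-] := sum_coord al s.
by apply: series_w_le1 => i; exact: sum_tm_bnd.
Qed.

Lemma powR_le_self (a p : R) : 0 <= a <= 1 -> 1 <= p -> a `^ p <= a.
Proof.
move=> /andP[a0 a1] p1; have [->|an0] := eqVneq a 0.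
  by rewrite powR0 // gt_eqF // (lt_le_trans _ p1).
by apply: ge1r_powR => //; rewrite a1 andbT lt_def an0 a0.
Qed.

Lemma esum_bound (z : A) (p : R) (an al : nat -> A) : 1 <= p ->
  (\esum_(b in [set b : A | b <> z]) ((`|pp R an b - pp R al b| `^ p)%:E) <= 2%:E)%E.
Proof.
move=> p1; apply: ge_ereal_sup => _ [X [finX XS] <-].
rewrite fsumEFin // lee_fin fsbig_finite //.
set s := finmap.enum_fset _.
have us : uniq s by apply: finmap.fset_uniq.
apply: (@le_trans _ _ (\sum_(b <- s) (Defs.coord R an b + Defs.coord R al b))).
  apply: ler_sum => b _; rewrite /pp.
  have h0 := coord_ge0 an b; have h1 := coord_le1 an b.
  have h2 := coord_ge0 al b; have h3 := coord_le1 al b.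
  apply: (@le_trans _ _ `|Defs.coord R an b - Defs.coord R al b|).
    apply: powR_le_self => //; rewrite normr_ge0 /= ler_norml; apply/andP; split; lra.
  apply: le_trans (ler_normB _ _) _; rewrite !ger0_norm //.
rewrite big_split /=.
have := sum_coord_le1 an _ us; have := sum_coord_le1 al _ us; lra.
Qed.

Lemma lp_ge (z : A) (p : R) (x : A -> R) c : 1 <= p -> c <> z ->
  (\esum_(b in [set b : A | b <> z]) ((`|x b| `^ p)%:E) <= 2%:E)%E ->
  `|x c| <= lpnorm z p x.
Proof.
move=> p1 cz hE.
have h1 : ((`|x c| `^ p)%:E <= \esum_(b in [set b : A | b <> z]) ((`|x b| `^ p)%:E))%E.
  apply: esum_ge; exists [set c]; last by rewrite fsbig_set1.
  by split; [exact: finite_set1| move=> y ->].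
have key : forall E : \bar R, ((`|x c| `^ p)%:E <= E)%E -> (E <= 2%:E)%E ->
   `|x c| `^ p <= fine E.
  by case=> [r| |] //=; rewrite lee_fin.
have hf := key _ h1 hE.
rewrite /lpnorm.
have p0 : p != 0 by rewrite gt_eqF // (lt_le_trans _ p1).
have -> : `|x c| = (`|x c| `^ p) `^ p^-1 by rewrite -powRrM mulfV // powRr1.
apply: ge0_ler_powR => //.
- by rewrite invr_ge0 (le_trans _ p1).
- by rewrite nnegrE powR_ge0.
- by rewrite nnegrE (le_trans _ hf) // powR_ge0.
Qed.



Lemma gapA al an k j c : (forall i, (i < k)%N -> an i = al i) -> an k = c ->
  al k != c -> (k < j)%N -> al j != c ->
  w R j <= Defs.coord R an c - Defs.coord R al c.
Proof.
move=> hpre hk hk' kj hj; rewrite !coordE.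
apply: (@core_lim R _ _ k); try by move=> i; apply: tm_bnd.
- by move=> i /hpre; rewrite /tm => ->.
- by rewrite /tm hk eqxx.
- by rewrite /tm (negbTE hk').
- by [].
- by rewrite {1}/tm (negbTE hj); case/andP: (tm_bnd an c j).
Qed.

Lemma gapB1 al an k j b : (forall i, (i < k)%N -> an i = al i) -> al k = b ->
  an k != b -> (k < j)%N -> al j = b ->
  w R j <= Defs.coord R al b - Defs.coord R an b.
Proof.
move=> hpre hk hk' kj hj; rewrite !coordE.
apply: (@core_lim R _ _ k); try by move=> i; apply: tm_bnd.
- by move=> i /hpre; rewrite /tm => ->.
- by rewrite /tm hk eqxx.
- by rewrite /tm (negbTE hk').
- by [].
- by rewrite {2}/tm hj eqxx; case/andP: (tm_bnd an b j).
Qed.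

Lemma tmD al b d i : (tm al b + tm al d) i = tm al b i + tm al d i.
Proof. by []. Qed.

Lemma tm2_bnd al b d i : b != d -> 0 <= (tm al b + tm al d) i <= w R i.
Proof.
move=> bd; have -> : (tm al b + tm al d) i = tm al b i + tm al d i by [].
rewrite /tm; case: (eqVneq (al i) b) => [->|_]; first by rewrite (negbTE bd) addr0 lexx ltW ?w_gt0.
by rewrite add0r; case: ifP; rewrite ?lexx ?ltW ?w_gt0.
Qed.

Lemma gapB2 al an k j b d : b != d -> (forall i, (i < k)%N -> an i = al i) -> al k = b ->
  an k != b -> an k != d -> (k < j)%N -> al j = d ->
  w R j <= (Defs.coord R al b + Defs.coord R al d) - (Defs.coord R an b + Defs.coord R an d).
Proof.
move=> bd hpre hk hk1 hk2 kj hj; rewrite !coordE.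
have cv al' b' : cvgn (series (tm al' b')) by apply: series_w_cvg => i; exact: tm_bnd.
rewrite -!lim_seriesD //.
apply: (@core_lim R _ _ k); try by move=> i; apply: tm2_bnd.
- by move=> i /hpre; rewrite !tmD /tm => ->.
- by rewrite tmD /tm hk eqxx (negbTE bd) addr0.
- by rewrite tmD /tm (negbTE hk1) (negbTE hk2) addr0.
- by [].
- have db : d != b by rewrite eq_sym.
  have -> : (tm al b + tm al d) j = w R j by rewrite tmD /tm hj eqxx (negbTE db) add0r.
  by have := tm2_bnd an b d j bd; case/andP.
Qed.

Lemma key (z : A) (p : R) (al : nat -> A) (als : nat -> nat -> A) : 1 <= p ->
  (forall q : nat, ~ (forall m : nat, (q <= m)%N -> al m = al q)) ->
  forall k, exists2 g, 0 < g & forall n, (forall i, (i < k)%N -> als n i = al i) ->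
    als n k != al k -> g <= lpnorm z p (fun b => pp R (als n) b - pp R al b).
Proof.
move=> p1 nec k.
have [j2 [j2gt hj2]] : exists j2, (k.+1 < j2)%N /\ al j2 != al k.+1.
  have /existsNP [m /not_implyP [km nm]] := nec k.+1.
  exists m; split; last by apply/eqP.
  rewrite ltn_neqAle km andbT; apply/eqP => E; apply: nm; by rewrite E.
have [jB [jBgt hjB]] : exists jB, (k < jB)%N /\ al jB != z.
  case: (eqVneq (al k.+1) z) => h.
    by exists j2; split; [apply: ltn_trans j2gt | rewrite -h].
  by exists k.+1.
exists (Num.min (w R j2) (w R jB / 2)).
  by rewrite lt_min w_gt0 divr_gt0 ?w_gt0.
move=> n hpre hdiff.
set x := fun b => pp R (als n) b - pp R al b.
have hE := esum_bound z p (als n) al p1.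
have lpg c : c <> z -> `|x c| <= lpnorm z p x.
  by move=> cz; apply: lp_ge.
have wj2 := w_gt0 R j2; have wjB := w_gt0 R jB.
case: (eqVneq (als n k) z) => [cz|cnz].
  have bz : al k != z by move: hdiff; rewrite cz eq_sym.
  have hb := lpg (al k) (elimN eqP bz).
  have nb := ler_norm (- x (al k)); rewrite normrN in nb.
  rewrite ge_min; apply/orP; right.
  case: (eqVneq (al jB) (al k)) => [E|NE].
    have := gapB1 _ _ _ _ _ hpre erefl hdiff jBgt E.
    rewrite /x /pp in nb hb *; lra.
  have hd := lpg (al jB) (elimN eqP hjB).
  have nd := ler_norm (- x (al jB)); rewrite normrN in nd.
  have := gapB2 al (als n) k jB (al k) (al jB) ltac:(by rewrite eq_sym) hpre erefl hdiff ltac:(by rewrite cz eq_sym) jBgt erefl.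
  rewrite /x /pp in nb hb nd hd *; lra.
have hc := lpg (als n k) (elimN eqP cnz).
have nc := ler_norm (x (als n k)).
rewrite ge_min; apply/orP; left.
case: (eqVneq (al k.+1) (als n k)) => [E|NE].
  have := gapA al (als n) k j2 (als n k) hpre erefl ltac:(by rewrite eq_sym) (ltn_trans (ltnSn k) j2gt) ltac:(by rewrite -E).
  rewrite /x /pp in nc hc *; lra.
have := gapA al (als n) k k.+1 (als n k) hpre erefl ltac:(by rewrite eq_sym) (ltnSn k) NE.
have := w_anti R _ _ (ltnW j2gt).
rewrite /x /pp in nc hc *; lra.
Qed.

End Coord.

Theorem proposition3p3 (R : realType) (A : choiceType) (z : A) (p : R)
  (alphas : nat -> (nat -> A)) (alpha : nat -> A) :
  infinite_set [set: A] ->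
  1 <= p ->
  (forall q : nat, ~ (forall m : nat, (q <= m)%N -> alpha m = alpha q)) ->
  (fun n => lpnorm z p (fun b => pp R (alphas n) b - pp R alpha b)) @ \oo --> (0 : R) ->
  (fun n => Nd R (alphas n) alpha) @ \oo --> (0 : R).
Proof.
move=> _ p1 nec H.
have agree : forall K, \forall n \near \oo, forall i, (i < K)%N -> alphas n i = alpha i.
  elim=> [|K IH]; first by apply: nearW => n i.
  have [g g0 hg] := key R A z p alpha alphas p1 nec K.
  have HL : \forall n \near \oo,
      lpnorm z p (fun b => pp R (alphas n) b - pp R alpha b) < g.
    move/cvgrPdist_lt: H => /(_ g g0); apply: filterS => n.
    by rewrite sub0r normrN; apply: le_lt_trans; apply: ler_norm.
  near=> n.
  have hI : forall i, (i < K)%N -> alphas n i = alpha i by near: n; exact: IH.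
  have hL : lpnorm z p (fun b => pp R (alphas n) b - pp R alpha b) < g by near: n; exact: HL.
  move=> i; rewrite ltnS leq_eqVlt => /orP[/eqP ->|iK]; last by apply: hI.
  apply/eqP; apply/negPn/negP => hne.
  have := hg n hI hne; lra.
Unshelve. all: end_near.
apply/cvgrPdist_le => e e0.
have [N _ HN] := near_infty_natSinv_lt (PosNum e0).
have eN := HN N (leqnn N).
apply: filterS (agree N) => n hag.
rewrite sub0r normrN /Nd.
case: pselect => [h|_]; last by rewrite normr0 ltW.
case: ex_minnP => m hm _.
have Nm : (N <= m)%N.
  rewrite leqNgt; apply/negP => mN; move: hm; by rewrite hag // eqxx.
rewrite ger0_norm ?invr_ge0 // (le_trans _ (ltW eN)) //=.
by rewrite lef_pV2 ?posrE // ler_nat.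
Qed.
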